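(* Let $M$ be a modular lattice of finite length with least element $0$ and greatest element $1$, and let $S(M)$ be its skeleton. Then (f) $S(M)=\{x\in M: x^{*+}=x\}$, and the maximal atomistic intervals of $M$ are exactly the intervals $[x,x^*]$ with $x\in S(M)$; (g) $S(M)$ is closed under the join $+$ of $M$, has least element $0$ and greatest element $1^+$, and with the order inherited from $M$ it is a lattice in which $x\vee y=x+y$ and $x\wedge y=(x\cdot y)^{*+}$.
   Context: $M$ is a modular lattice of finite length (every chain finite) with join $+$, meet $\cdot$. For $a\in M$: $a^*$ is the join of all elements covering $a$ if $a<1$, and $1^*=1$; $a^+$ is the meet of all elements covered by $a$ if $a>0$, and $0^+=0$; $a^{*+}$ means $(a^* )^+$. An interval $[a,b]$ is \emph{atomistic} if every element of it is a join of atoms of $[a,b]$ (elements covering $a$). The \emph{skeleton} $S(M)$ is the set of least elements of the maximal (under inclusion) atomistic intervals of $M$. *)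

(* Defs.v *)
From HB Require Import structures.
From mathcomp Require Import all_boot all_order.
From Stdlib Require Import ClassicalEpsilon.
Set Implicit Arguments. Unset Strict Implicit. Unset Printing Implicit Defensive.
Import Order.Theory.
Local Open Scope order_scope.

Section Defs.
Context {d : Order.disp_t} {M : tbLatticeType d}.

Definition modular : Prop :=
  forall x y z : M, x <= z -> x `|` (y `&` z) = (x `|` y) `&` z.

Definition is_chain (C : M -> Prop) : Prop :=
  forall x y, C x -> C y -> (x <= y) || (y <= x).
Definition finite_length : Prop :=
  forall C : M -> Prop, is_chain C -> exists s : seq M, forall x, C x -> x \in s.

Definition covers (a b : M) : Prop :=
  a < b /\ forall z, a <= z -> z <= b -> z = a \/ z = b.

Definition is_lub (S : M -> Prop) (u : M) : Prop :=
  (forall x, S x -> x <= u) /\ (forall v, (forall x, S x -> x <= v) -> u <= v).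
Definition is_glb (S : M -> Prop) (u : M) : Prop :=
  (forall x, S x -> u <= x) /\ (forall v, (forall x, S x -> v <= x) -> v <= u).

(* a^* : join of all elements covering a (1^* = 1); the join exists in a
   lattice of finite length, and is selected by choice *)
Definition ustar (a : M) : M :=
  if a == \top then \top
  else epsilon (inhabits (\bot : M)) (is_lub (fun b => covers a b)).

(* a^+ : meet of all elements covered by a (0^+ = 0) *)
Definition uplus (a : M) : M :=
  if a == \bot then \bot
  else epsilon (inhabits (\bot : M)) (is_glb (fun b => covers b a)).

(* the interval [a,b] is atomistic: every element of it is a join of atoms
   of [a,b] (the empty join being a) *)
Definition atom_of (a b x : M) : Prop := covers a x /\ x <= b.
Definition atomistic (a b : M) : Prop :=
  a <= b /\
  forall x, a <= x -> x <= b ->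
    exists s : seq M, (forall y, y \in s -> atom_of a b y) /\ x = foldr Order.join a s.

Definition max_atomistic (a b : M) : Prop :=
  atomistic a b /\
  forall c e, atomistic c e ->
    (forall z, a <= z -> z <= b -> c <= z /\ z <= e) ->
    (forall z, c <= z -> z <= e -> a <= z /\ z <= b).

Definition in_skeleton (x : M) : Prop := exists b, max_atomistic x b.

End Defs.

(* Main.v *)
Require Import Defs.
From HB Require Import structures.
From mathcomp Require Import all_boot all_order.
From Stdlib Require Import Classical ClassicalEpsilon.
Set Implicit Arguments. Unset Strict Implicit. Unset Printing Implicit Defensive.
Import Order.Theory.
Local Open Scope order_scope.

Section Fin.
Context {d : Order.disp_t} {M : tbLatticeType d}.
Hypothesis Hfin : @finite_length d M.

Lemma maxP (P : M -> Prop) x0 : P x0 ->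
  exists m, P m /\ forall y, P y -> m <= y -> y = m.
Proof.
move=> Px0; apply: NNPP => H.
have H' : forall m, P m -> exists y, P y /\ m < y.
  move=> m Pm; apply: NNPP => Hn; apply: H; exists m; split=> // y Py my.
  apply: NNPP => ne; apply: Hn; exists y; split=> //.
  by rewrite lt_def my andbT; apply/eqP.
pose f m := epsilon (inhabits m) (fun y => P y /\ m < y).
have Hf : forall m, P m -> P (f m) /\ m < f m.
  by move=> m Pm; apply: (epsilon_spec (inhabits m) (fun y => P y /\ m < y)); apply: H'.
pose x n := iter n f x0.
have Px : forall n, P (x n) by elim=> [|n IH] //=; case: (Hf _ IH).
have xS : forall n, x n < x n.+1 by move=> n; case: (Hf _ (Px n)).
have xlt : forall i j, (i < j)%N -> x i < x j.
  move=> i; elim=> [//|j IH]; rewrite ltnS leq_eqVlt => /orP [/eqP -> //|/IH h].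
  exact: lt_trans h (xS j).
have xle : forall i j, (i <= j)%N -> x i <= x j.
  by move=> i j; rewrite leq_eqVlt => /orP [/eqP -> //|/xlt/ltW].
have Hch : is_chain (fun z => exists n, z = x n).
  move=> _ _ [i ->] [j ->]; case: (leqP i j) => h; first by rewrite xle.
  by rewrite (xle _ _ (ltnW h)) orbT.
have [s Hs] := Hfin Hch.
have U : uniq [seq x n | n <- iota 0 (size s).+1].
  rewrite map_inj_uniq ?iota_uniq // => i j eq.
  apply/eqP; rewrite eqn_leq; apply/negP => /negP; rewrite negb_and -!ltnNge.
  by case/orP => /xlt; rewrite eq ltxx.
have Hsub : {subset [seq x n | n <- iota 0 (size s).+1] <= s}.
  by move=> z /mapP [n _ ->]; apply: Hs; exists n.
by have := uniq_leq_size U Hsub; rewrite size_map size_iota ltnn.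
Qed.
End Fin.

Set Implicit Arguments.


Lemma finlen_dual d (M : tbLatticeType d) : @finite_length d M -> @finite_length _ M^d.
Proof.
move=> Hf C HC; apply: Hf => x y Cx Cy; rewrite orbC; exact: (HC x y Cx Cy).
Qed.

Lemma modular_dual d (M : tbLatticeType d) : @modular d M -> @modular _ M^d.
Proof.
move=> Hm; change (forall x y z : M, z <= x -> x `&` (y `|` z) = (x `&` y) `|` z) => x y z zx.
by rewrite meetC (joinC y z) -Hm // joinC meetC.
Qed.

Section Gen.
Context {d : Order.disp_t} {M : tbLatticeType d}.
Hypothesis Hmod : @modular d M.
Hypothesis Hfin : @finite_length d M.

Definition Star (a u : M) := is_lub (fun z => z = a \/ covers a z) u.
Definition Plus (b u : M) := is_glb (fun z => z = b \/ covers z b) u.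
Definition cint (a b : M) := forall x, a <= x -> x <= b ->
  exists y, a <= y /\ y <= b /\ x `&` y = a /\ x `|` y = b.

Lemma minP (P : M -> Prop) x0 : P x0 ->
  exists m, P m /\ forall y, P y -> y <= m -> y = m.
Proof. exact: (@maxP _ M^d (finlen_dual Hfin)). Qed.

Lemma cover_up (a b : M) : a < b -> exists c, covers a c /\ c <= b.
Proof.
move=> ab.
have [m [[am mb] mmin]] := minP (P := fun z => a < z /\ z <= b) (conj ab (lexx b)).
exists m; split=> //; split=> // z az zm.
case: (eqVneq z a) => [->|ne]; first by left.
right; apply: mmin => //; split; last exact: le_trans zm mb.
by rewrite lt_def ne az.
Qed.

Lemma fj_ge (a : M) s : a <= foldr Order.join a s.
Proof. by elim: s => //= p s IH; apply: le_trans IH (leUr _ _). Qed.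

Lemma fj_in (a : M) s p : p \in s -> p <= foldr Order.join a s.
Proof.
elim: s => //= q s IH; rewrite in_cons => /orP [/eqP ->|/IH h]; first exact: leUl.
exact: le_trans h (leUr _ _).
Qed.

Lemma fj_le (a v : M) s : a <= v -> (forall p, p \in s -> p <= v) -> foldr Order.join a s <= v.
Proof.
move=> av; elim: s => //= p s IH H; rewrite leUx H ?mem_head //=.
by apply: IH => q qs; apply: H; rewrite in_cons qs orbT.
Qed.

Lemma cover_meet (a p x : M) : covers a p -> a <= x -> p `&` x = a \/ p <= x.
Proof.
move=> [ap Hp] ax.
have [] := Hp (p `&` x); first by rewrite lexI (ltW ap) ax.
  exact: leIl.
  by left.
by move/meet_idPl; right.
Qed.

Lemma cover_transfer (a p b : M) : covers a p -> a <= b -> ~ p <= b ->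
  covers b (b `|` p).
Proof.
move=> cap ab npb; split.
  rewrite lt_def leUl andbT; apply/negP => /eqP e; apply: npb.
  by rewrite -e leUr.
move=> w bw wbp.
have E : b `|` (p `&` w) = w by rewrite Hmod //; apply/meet_idPr.
case: (cover_meet cap (le_trans ab bw)) => [h|h].
  by left; rewrite -E h; apply/join_idPl.
by right; rewrite -E; congr (_ `|` _); apply/meet_idPl.
Qed.

Lemma lub_uniq (S : M -> Prop) u v : is_lub S u -> is_lub S v -> u = v.
Proof.
move=> [u1 u2] [v1 v2]; apply/eqP; rewrite eq_le.
by rewrite (u2 _ v1) (v2 _ u1).
Qed.

Lemma star_exists (a : M) :
  exists s, (forall p, p \in s -> covers a p) /\ Star a (foldr Order.join a s).
Proof.
have [m [[s [Hs ->]] mmax]] := maxP Hfin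
  (P := fun u => exists s, (forall p, p \in s -> covers a p) /\ u = foldr Order.join a s)
  (x0 := a) (ex_intro _ [::] (conj (fun p (h : p \in [::]) => False_ind _ (notF h)) erefl)).
exists s; split => //; split.
  move=> z [->|cz]; first exact: fj_ge.
  have e := mmax (z `|` foldr Order.join a s).
  rewrite -e; first exact: leUl.
    exists (z :: s); split => //= q; rewrite in_cons => /orP [/eqP ->//|]; exact: Hs.
  exact: leUr.
move=> v Hv; apply: fj_le; first by apply: Hv; left.
by move=> p ps; apply: Hv; right; apply: Hs.
Qed.

Lemma Star_fin (a u : M) : Star a u ->
  exists s, (forall p, p \in s -> covers a p) /\ u = foldr Order.join a s.
Proof.
move=> Su; have [s [Hs Ss]] := star_exists a; exists s; split=> //.
exact: lub_uniq Su Ss.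
Qed.

Lemma Star_ge (a u : M) : Star a u -> a <= u.
Proof. by case=> H _; apply: H; left. Qed.

Lemma Star_cov (a u p : M) : Star a u -> covers a p -> p <= u.
Proof. by case=> H _ c; apply: H; right. Qed.

Lemma Star_mono (a b u v : M) : Star a u -> Star b v -> a <= b -> u <= v.
Proof.
move=> [_ Su] [Sv _] ab; apply: Su => z [->|cz].
  by apply: le_trans ab (Sv _ (or_introl erefl)).
have [pb|npb] := boolP (z <= b).
  by apply: le_trans pb (Sv _ (or_introl erefl)).
have c := cover_transfer cz ab (negP npb).
by apply: le_trans (leUr _ _) (Sv _ (or_intror c)).
Qed.

Lemma cint_fin (a : M) s : (forall p, p \in s -> covers a p) ->
  cint a (foldr Order.join a s).
Proof.
move=> Hs x ax xb; set b := foldr Order.join a s in xb *.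
have [z [[az [zb xz]] zmax]] := maxP Hfin
  (P := fun z => a <= z /\ z <= b /\ x `&` z = a) (x0 := a)
  (conj (lexx a) (conj (fj_ge a s) (meet_r (x := x) ax))).
exists z; split=> //; split=> //; split=> //.
case: (boolP (all (fun p => p <= x `|` z) s)) => [/allP H|/allPn [p ps pn]].
  apply/eqP; rewrite eq_le leUx xb zb /=.
  apply: fj_le => //; exact: le_trans ax (leUl _ _).
have cp := Hs p ps.
have pm : p `&` (x `|` z) = a.
  case: (cover_meet cp (le_trans ax (leUl x z))) => // h.
  by rewrite h in pn.
have E1 : (x `|` z) `&` (z `|` p) = z.
  by rewrite meetC -Hmod ?leUr // pm; apply/join_idPl.
have E2 : x `&` (z `|` p) = a.
  by rewrite -{1}(joinKI z x) -meetA E1.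
have Pz : a <= z `|` p /\ z `|` p <= b /\ x `&` (z `|` p) = a.
  split; first exact: le_trans az (leUl _ _).
  by split=> //; rewrite leUx zb fj_in.
have e := zmax _ Pz (leUl _ _).
exfalso; move/negP: pn; apply; apply: (le_trans (y := z)); last exact: leUr.
by rewrite -e; exact: leUr.
Qed.

Lemma cint_sub (a b a' b' : M) : cint a b -> a <= a' -> a' <= b' -> b' <= b ->
  cint a' b'.
Proof.
move=> H aa' a'b' b'b x a'x xb'.
have [y [ay [yb [xy1 xy2]]]] := H x (le_trans aa' a'x) (le_trans xb' b'b).
exists ((y `|` a') `&` b'); split; first by rewrite lexI leUr a'b'.
split; first exact: leIr.
split.
  rewrite meetA (joinC y a') (meetC x) -Hmod // (meetC y x) xy1 (join_l aa').
  exact: meet_l.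
rewrite Hmod // joinA xy2 (join_l (le_trans a'b' b'b)); exact: meet_r.
Qed.

Lemma cint_atom (a b : M) : cint a b -> forall x, a <= x -> x <= b ->
  exists s, (forall p, p \in s -> covers a p /\ p <= x) /\ x = foldr Order.join a s.
Proof.
move=> H x ax xb.
have [u0 [[s [Hs ->]] umax]] := maxP Hfin
  (P := fun u => exists s, (forall p, p \in s -> covers a p /\ p <= x) /\ u = foldr Order.join a s)
  (x0 := a) (ex_intro _ [::] (conj (fun p (h : p \in [::]) => False_ind _ (notF h)) erefl)).
exists s; split => //.
set u := foldr Order.join a s in umax *.
have ux : u <= x by apply: fj_le => // p ps; case: (Hs p ps).
case: (eqVneq x u) => // ne; exfalso.
have Hq : forall q, covers a q -> q <= x -> q <= u.
  move=> q cq qx; have e := umax (q `|` u).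
  rewrite -e; first exact: leUl.
    exists (q :: s); split => //= r; rewrite in_cons => /orP [/eqP ->//|]; exact: Hs.
  exact: leUr.
have [v [av [vx [uv1 uv2]]]] := cint_sub H (lexx a) ax xb (fj_ge a s) ux.
case: (eqVneq v a) => [va|va].
  by move: ne; rewrite -uv2 va (join_l (fj_ge a s)) eqxx.
have [q [cq qv]] : exists q, covers a q /\ q <= v by apply: cover_up; rewrite lt_def va av.
have qu := Hq q cq (le_trans qv vx).
have : q <= u `&` v by rewrite lexI qu qv.
rewrite uv1 => qa; case: cq => aq _.
by have := lt_le_trans aq qa; rewrite ltxx.
Qed.

End Gen.

Set Implicit Arguments.


Section Dual.
Context {d : Order.disp_t} {M : tbLatticeType d}.

Lemma covers_dual (a b : M) : @covers _ M^d a b <-> @covers _ M b a.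
Proof.
split=> [[ab H]|[ab H]]; split=> // z h1 h2.
  by case: (H z h2 h1); [right|left].
by case: (H z h2 h1); [right|left].
Qed.

Lemma Star_dual (b u : M) : @Star _ M^d b u <-> @Plus _ M b u.
Proof.
split=> [[H1 H2]|[H1 H2]]; split.
- by move=> x [->|/covers_dual c]; apply: H1; [left|right].
- move=> v Hv; apply: H2 => x [->|/covers_dual c]; apply: Hv; [left|right] => //.
- by move=> x [->|/covers_dual c]; apply: H1; [left|right].
- move=> v Hv; apply: H2 => x [->|c]; apply: Hv; [left|right] => //.
  exact/covers_dual.
Qed.

Lemma cint_dual (a b : M) : @cint _ M^d b a <-> @cint _ M a b.
Proof.
split=> H x h1 h2; have [y [y1 [y2 [y3 y4]]]] := H x h2 h1; exists y; do !split => //.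
Qed.
End Dual.

Section Gen2.
Context {d : Order.disp_t} {M : tbLatticeType d}.
Hypothesis Hmod : @modular d M.
Hypothesis Hfin : @finite_length d M.

Lemma Star_lub (a u : M) : a != \top -> (is_lub (covers a) u <-> Star a u).
Proof.
move=> ne.
have [c0 [cc0 _]] : exists c, covers a c /\ c <= \top.
  by apply: (cover_up Hfin); rewrite lt_def eq_sym ne lex1.
split=> [[H1 H2]|[H1 H2]]; split.
- move=> x [->|c]; last exact: H1.
  exact: le_trans (ltW cc0.1) (H1 _ cc0).
- move=> v Hv; apply: H2 => x c; apply: Hv; by right.
- by move=> x c; apply: H1; right.
- move=> v Hv; apply: H2 => x [->|c]; last exact: Hv.
  exact: le_trans (ltW cc0.1) (Hv _ cc0).
Qed.

Lemma Star_top : @Star _ M \top \top.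
Proof.
split; first by move=> x [->|[c _]] //; rewrite lex1.
by move=> v Hv; apply: Hv; left.
Qed.
End Gen2.

Unset Implicit Arguments.
Section Main.
Context {d : Order.disp_t} {M : tbLatticeType d}.
Hypothesis Hmod : @modular d M.
Hypothesis Hfin : @finite_length d M.
Let Hmodd := modular_dual Hmod.
Let Hfind := finlen_dual Hfin.

Lemma ustar_spec (a : M) : Star a (ustar a).
Proof.
rewrite /ustar; case: eqP => [->|/eqP ne]; first exact: Star_top.
apply/(Star_lub Hfin _ ne); apply: epsilon_spec.
have [s [_ Ss]] := star_exists Hfin a.
by exists (foldr Order.join a s); apply/(Star_lub Hfin _ ne).
Qed.

Lemma uplus_spec (b : M) : Plus b (uplus b).
Proof.
rewrite /uplus; case: eqP => [->|/eqP ne].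
  exact/Star_dual/(@Star_top _ M^d).
apply/Star_dual/(Star_lub Hfind _ ne).
have H : forall u, @is_lub _ M^d (@covers _ M^d b) u <-> is_glb (fun z => covers z b) u.
  move=> u; split=> [[H1 H2]|[H1 H2]]; split.
  - by move=> x /covers_dual c; apply: H1.
  - by move=> v Hv; apply: H2 => x c; apply: Hv; apply/covers_dual.
  - by move=> x /covers_dual c; apply: H1.
  - by move=> v Hv; apply: H2 => x c; apply: Hv; apply/covers_dual.
apply/H; apply: epsilon_spec.
have [s [_ Ss]] := star_exists Hfind b.
eexists; apply/H; apply/(Star_lub Hfind _ ne); exact: Ss.
Qed.

Lemma Plus_dual (b : M) : @Star _ M^d b (uplus b).
Proof. exact/Star_dual/uplus_spec. Qed.

Lemma le_star (a : M) : a <= ustar a.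
Proof. exact: Star_ge (ustar_spec a). Qed.

Lemma plus_le (b : M) : uplus b <= b.
Proof. exact: (Star_ge (Plus_dual b)). Qed.

Lemma star_top : ustar (\top : M) = \top.
Proof. by rewrite /ustar eqxx. Qed.

Lemma star_mono (a b : M) : a <= b -> ustar a <= ustar b.
Proof. exact: Star_mono (ustar_spec a) (ustar_spec b). Qed.

Lemma plus_mono (a b : M) : a <= b -> uplus a <= uplus b.
Proof. move=> ab; exact: (Star_mono Hmodd (Plus_dual b) (Plus_dual a) ab). Qed.

Lemma cint_star (a : M) : cint a (ustar a).
Proof.
have [s [Hs ->]] := Star_fin Hfin (ustar_spec a); exact: cint_fin.
Qed.

Lemma at_char (a b : M) : atomistic a b <-> a <= b /\ b <= ustar a.
Proof.
split.
  move=> [ab H]; split=> //; have [s [Hs ->]] := H b ab (lexx b).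
  apply: fj_le; first exact: le_star.
  by move=> p /Hs [c _]; exact: Star_cov (ustar_spec a) c.
move=> [ab bs]; split=> // x ax xb.
have C := cint_sub Hmod (cint_star a) (lexx a) ab bs.
have [s [Hs ->]] := cint_atom Hmod Hfin C ax xb.
exists s; split=> // p /Hs [c px]; split=> //; exact: le_trans px xb.
Qed.

Lemma lemB (b c : M) : c <= b -> b <= ustar c -> uplus b <= c.
Proof.
move=> cb bs.
have C := cint_sub Hmod (cint_star c) (lexx c) cb bs.
have Cd : @cint _ M^d b c by apply/cint_dual.
have [s [Hs e]] := cint_atom Hmodd Hfind Cd cb (lexx _).
change (@Order.le _ M^d c (uplus b)); rewrite {1}e.
apply: fj_le; first exact: Star_ge (Plus_dual b).
by move=> p /Hs [cp _]; exact: Star_cov (Plus_dual b) cp.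
Qed.

Lemma lemB' (b c : M) : uplus b <= c -> c <= b -> b <= ustar c.
Proof.
move=> pc cb.
have [s [Hs e]] := Star_fin Hfind (Plus_dual b).
have Cd := cint_fin Hmodd Hfind Hs; rewrite -e in Cd.
have C : cint (uplus b) b by apply/cint_dual.
have C2 := cint_sub Hmod C pc cb (lexx b).
have [s' [Hs' ->]] := cint_atom Hmod Hfin C2 cb (lexx b).
apply: fj_le; first exact: le_star.
by move=> p /Hs' [cp _]; exact: Star_cov (ustar_spec c) cp.
Qed.

Lemma P1 (x : M) : uplus (ustar x) <= x.
Proof. exact: lemB (le_star x) (lexx _). Qed.

Lemma P2 (x : M) : ustar x <= ustar (uplus (ustar x)).
Proof. exact: lemB' (lexx _) (plus_le _). Qed.

Lemma sp_mono (x y : M) : x <= y -> uplus (ustar x) <= uplus (ustar y).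
Proof. by move=> xy; apply/plus_mono/star_mono. Qed.

Lemma sp_idem (x : M) : uplus (ustar (uplus (ustar x))) = uplus (ustar x).
Proof.
congr uplus; apply/eqP; rewrite eq_le P2 andbT; exact/star_mono/P1.
Qed.

Lemma max_char (a b : M) : max_atomistic a b <-> b = ustar a /\ uplus (ustar a) = a.
Proof.
split.
  move=> [/at_char [ab bs] Hm].
  have eb : b = ustar a.
    apply/eqP; rewrite eq_le bs /=.
    have := Hm a (ustar a) (proj2 (at_char _ _) (conj (le_star a) (lexx _))).
    move=> /(_ _ (ustar a) (le_star a) (lexx _)) [] //.
    by move=> z az zb; split=> //; exact: le_trans zb bs.
  split=> //; apply/eqP; rewrite eq_le P1 /=.
  have At : atomistic (uplus (ustar a)) (ustar a).
    apply/at_char; split; first exact: le_trans (P1 a) (le_star a).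
    exact: P2.
  have Inc : forall z, a <= z -> z <= b -> uplus (ustar a) <= z /\ z <= ustar a.
    by move=> z az zb; split; [exact: le_trans (P1 a) az|rewrite -eb].
  by have [] := Hm _ _ At Inc (uplus (ustar a)) (lexx _) (le_trans (P1 a) (le_star a)).
move=> [-> e]; split; first exact/at_char/(conj (le_star a) (lexx _)).
move=> c f /at_char [cf fs] Hinc.
have [ca _] := Hinc a (lexx a) (le_star a).
have [_ af] := Hinc (ustar a) (le_star a) (lexx _).
have ac : a <= c.
  rewrite -{1}e; apply: lemB; first exact: le_trans ca (le_star a).
  exact: le_trans af fs.
have ec : c = a by apply/eqP; rewrite eq_le ca ac.
move=> z cz zf; split; first exact: le_trans ac cz.
by apply: le_trans zf _; rewrite -ec; apply: le_trans fs _; rewrite ec.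
Qed.

Lemma skel_char (x : M) : in_skeleton x <-> uplus (ustar x) = x.
Proof.
split; first by move=> [b /max_char []].
by move=> e; exists (ustar x); apply/max_char.
Qed.

End Main.

Theorem theorem6p2 (d : Order.disp_t) (M : tbLatticeType d)
  (Hmod : @modular d M) (Hfin : @finite_length d M) :
  (* (f) *)
  (forall x : M, in_skeleton x <-> uplus (ustar x) = x) /\
  (forall a b : M, max_atomistic a b <-> (in_skeleton a /\ b = ustar a)) /\
  (* (g) *)
  (forall x y : M, in_skeleton x -> in_skeleton y -> in_skeleton (x `|` y)) /\
  (in_skeleton (\bot : M) /\ forall x : M, in_skeleton x -> \bot <= x) /\
  (in_skeleton (uplus (\top : M)) /\ forall x : M, in_skeleton x -> x <= uplus \top) /\
  (forall x y : M, in_skeleton x -> in_skeleton y ->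
     x <= x `|` y /\ y <= x `|` y /\
     (forall z, in_skeleton z -> x <= z -> y <= z -> x `|` y <= z)) /\
  (forall x y : M, in_skeleton x -> in_skeleton y ->
     in_skeleton (uplus (ustar (x `&` y))) /\
     uplus (ustar (x `&` y)) <= x /\ uplus (ustar (x `&` y)) <= y /\
     (forall z, in_skeleton z -> z <= x -> z <= y -> z <= uplus (ustar (x `&` y)))).
Proof.
have SC := skel_char Hmod Hfin.
split; first exact: SC.
split.
  move=> a b; rewrite (max_char Hmod Hfin) SC; tauto.
split.
  move=> x y /SC ex /SC ey; apply/SC; apply/eqP; rewrite eq_le P1 //=.
  rewrite leUx; apply/andP; split.
    by rewrite -{1}ex; apply: sp_mono => //; exact: leUl.
  by rewrite -{1}ey; apply: sp_mono => //; exact: leUr.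
split.
  split=> [|x _]; last exact: le0x.
  apply/SC; apply/eqP; rewrite eq_le le0x andbT; exact: P1.
split.
  split.
    apply/SC; have := sp_idem Hmod Hfin (\top : M); by rewrite star_top.
  move=> x /SC ex; rewrite -ex; apply: le_trans (sp_mono Hmod Hfin _ _ (lex1 x)) _; by rewrite star_top.
split.
  move=> x y _ _; split; first exact: leUl.
  split; first exact: leUr.
  by move=> z _ xz yz; rewrite leUx xz yz.
move=> x y _ _; split; first by apply/SC; apply: sp_idem.
have m := P1 Hmod Hfin (x `&` y).
split; first exact: le_trans m (leIl _ _).
split; first exact: le_trans m (leIr _ _).
move=> z /SC ez zx zy; rewrite -ez; apply: sp_mono => //; by rewrite lexI zx zy.
Qed.
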